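(* Let $\psi\in C^1((0,\infty))$ be concave with $\psi'(1)=1$ and $H_\psi<\infty$, let $d>0$, and let $G=(V,E)$ be a finite connected graph satisfying $CD\psi(d,0)$. Then for every positive solution $u$ to the heat equation on $G$, all $x_1,x_2\in V$ and all $0<T_1<T_2$, \[ \log\frac{u(x_1,T_1)}{u(x_2,T_2)}\le\frac d2\log\frac{T_2}{T_1}+\frac{H_\psi\,\mathrm{dist}(x_1,x_2)^2}{T_2-T_1}. \]
   Context: A finite graph $G=(V,E)$: finite set $V$, irreflexive symmetric relation $E$; $v\sim w$ iff $(v,w)\in E$; $\mathrm{dist}$ is the combinatorial path distance; connected means all distances are finite. $C^+(V)$: positive functions. Laplacian $\Delta f(v)=\sum_{w\sim v}(f(w)-f(v))$. For $f\in C^+(V)$: $(\Delta^\psi f)(v):=\Delta\big[\psi\big(\tfrac{f}{f(v)}\big)\big](v)$; $(\Omega^\psi f)(v):=\Delta\Big[\psi'\big(\tfrac{f}{f(v)}\big)\cdot\tfrac{f}{f(v)}\cdot\big(\tfrac{\Delta f}{f}-\tfrac{(\Delta f)(v)}{f(v)}\big)\Big](v)$; $2\Gamma_2^\psi(f):=\Omega^\psi f+\frac{\Delta f\,\Delta^\psi f}{f}-\frac{\Delta(f\,\Delta^\psi f)}{f}$. $CD\psi(d,0)$: $\Gamma_2^\psi(f)\ge\frac1d(\Delta^\psi f)^2$ for all $f\in C^+(V)$. $\overline{\psi}(x):=\psi'(1)(x-1)-(\psi(x)-\psi(1))$, $H_\psi:=\sup_{x>1}\frac{(\log x)^2}{\overline{\psi}(x)}$.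 A solution to the heat equation is $u:V\times[0,\infty)\to\mathbb{R}$, continuously differentiable in $t$, with $\Delta u=\partial_tu$. *)

(* Defs.v *)
From Stdlib Require Import Reals Lra List.
Import ListNotations.
Open Scope R_scope.

Definition finite_graph {V : Type} (vs : list V) (adj : V -> V -> bool) : Prop :=
  NoDup vs /\ (forall v, In v vs) /\
  (forall v w, adj v w = adj w v) /\ (forall v, adj v v = false).

Inductive walk {V : Type} (adj : V -> V -> bool) : V -> V -> nat -> Prop :=
| walk0 : forall x, walk adj x x 0
| walkS : forall x y z n, adj x y = true -> walk adj y z n -> walk adj x z (S n).

Definition connected {V : Type} (adj : V -> V -> bool) : Prop :=
  forall x y, exists n, walk adj x y n.

Definition is_dist {V : Type} (adj : V -> V -> bool) (x y : V) (n : nat) : Prop :=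
  walk adj x y n /\ forall m, walk adj x y m -> (n <= m)%nat.

Definition Lap {V : Type} (vs : list V) (adj : V -> V -> bool) (f : V -> R) (v : V) : R :=
  fold_right Rplus 0 (map (fun w => if adj v w then f w - f v else 0) vs).

Definition DeltaPsi {V : Type} (vs : list V) (adj : V -> V -> bool)
  (psi : R -> R) (f : V -> R) (v : V) : R :=
  Lap vs adj (fun w => psi (f w / f v)) v.

Definition OmegaPsi {V : Type} (vs : list V) (adj : V -> V -> bool)
  (psi' : R -> R) (f : V -> R) (v : V) : R :=
  Lap vs adj (fun w => psi' (f w / f v) * (f w / f v)
                       * (Lap vs adj f w / f w - Lap vs adj f v / f v)) v.

Definition Gamma2Psi {V : Type} (vs : list V) (adj : V -> V -> bool)
  (psi psi' : R -> R) (f : V -> R) (v : V) : R :=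
  (OmegaPsi vs adj psi' f v
   + Lap vs adj f v * DeltaPsi vs adj psi f v / f v
   - Lap vs adj (fun w => f w * DeltaPsi vs adj psi f w) v / f v) / 2.

Definition CDpsi {V : Type} (vs : list V) (adj : V -> V -> bool)
  (psi psi' : R -> R) (d : R) : Prop :=
  forall f : V -> R, (forall w, 0 < f w) ->
  forall v, Gamma2Psi vs adj psi psi' f v >= / d * (DeltaPsi vs adj psi f v) ^ 2.

Definition C1_pos (psi psi' : R -> R) : Prop :=
  forall x, 0 < x -> derivable_pt_lim psi x (psi' x) /\ continuity_pt psi' x.

Definition concave_pos (psi : R -> R) : Prop :=
  forall x y t, 0 < x -> 0 < y -> 0 <= t <= 1 ->
  t * psi x + (1 - t) * psi y <= psi (t * x + (1 - t) * y).

Definition psibar (psi psi' : R -> R) (x : R) : R :=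
  psi' 1 * (x - 1) - (psi x - psi 1).

(* H_psi < oo and H_psi = H: every ratio (log x)^2 / psibar x (x > 1) is a finite
   real (psibar x > 0) and H is the supremum of these ratios. *)
Definition H_psi_finite_eq (psi psi' : R -> R) (H : R) : Prop :=
  (forall x, 1 < x -> 0 < psibar psi psi' x) /\
  is_lub (fun r => exists x, 1 < x /\ r = (ln x) ^ 2 / psibar psi psi' x) H.

(* u is a solution to the heat equation on V x [0,oo), positive there.
   Derivative for t > 0 two-sided, at t = 0 the right derivative.
   (The t-derivative Delta u(.,t)(v) is then automatically continuous on [0,oo).) *)
Definition pos_heat_solution {V : Type} (vs : list V) (adj : V -> V -> bool)
  (u : V -> R -> R) : Prop :=
  (forall v t, 0 <= t -> 0 < u v t) /\
  (forall v t, 0 < t -> derivable_pt_lim (u v) t (Lap vs adj (fun w => u w t) v)) /\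
  (forall v, limit1_in (fun h => (u v h - u v 0) / h) (fun h => 0 < h)
                       (Lap vs adj (fun w => u w 0) v) 0).

(* Main.v *)
Require Import Defs.
From Stdlib Require Import Reals.
From Stdlib Require Import Lra List.
Import ListNotations.
Open Scope R_scope.

Lemma deriv_sum {V : Type} (l : list V) (F : V -> R -> R) (F' : V -> R) t :
 (forall w, In w l -> derivable_pt_lim (F w) t (F' w)) ->
 derivable_pt_lim (fun s => fold_right Rplus 0 (map (fun w => F w s) l)) t
   (fold_right Rplus 0 (map F' l)).
Proof.
  induction l as [|w l IH]; intro HF; simpl.
  - exact (derivable_pt_lim_const 0 t).
  - apply (derivable_pt_lim_plus (F w) (fun s => fold_right Rplus 0 (map (fun w => F w s) l))).
    + apply HF; left; reflexivity.
    + apply IH; intros; apply HF; right; assumption.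
Qed.

Lemma sum_le {V : Type} (l : list V) (g h : V -> R) :
  (forall w, In w l -> g w <= h w) ->
  fold_right Rplus 0 (map g l) <= fold_right Rplus 0 (map h l).
Proof.
  induction l as [|w l IH]; intro H; simpl. lra.
  assert (g w <= h w) by (apply H; left; auto).
  assert (fold_right Rplus 0 (map g l) <= fold_right Rplus 0 (map h l)) by (apply IH; intros; apply H; right; auto).
  lra.
Qed.

Lemma sum_nonneg {V : Type} (l : list V) (g : V -> R) :
  (forall w, In w l -> 0 <= g w) -> 0 <= fold_right Rplus 0 (map g l).
Proof.
  induction l as [|w l IH]; intro H; simpl. lra.
  assert (0 <= g w) by (apply H; left; auto).
  assert (0 <= fold_right Rplus 0 (map g l)) by (apply IH; intros; apply H; right; auto).
  lra.
Qed.

Lemma sum_ge_one {V : Type} (l : list V) (g : V -> R) y :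
  (forall w, In w l -> 0 <= g w) -> In y l ->
  g y <= fold_right Rplus 0 (map g l).
Proof.
  induction l as [|w l IH]; intros H Hy; simpl. destruct Hy.
  assert (0 <= g w) by (apply H; left; auto).
  assert (0 <= fold_right Rplus 0 (map g l)) by (apply sum_nonneg; intros; apply H; right; auto).
  destruct Hy as [<-|Hy]. lra.
  specialize (IH (fun w H' => H w (or_intror H')) Hy). lra.
Qed.

Lemma sum_mult {V : Type} (l : list V) (g : V -> R) c :
  fold_right Rplus 0 (map g l) * c = fold_right Rplus 0 (map (fun w => g w * c) l).
Proof. induction l; simpl. ring. rewrite <- IHl. ring. Qed.

Lemma sum_minus {V : Type} (l : list V) (g h : V -> R) :
  fold_right Rplus 0 (map g l) - fold_right Rplus 0 (map h l)
  = fold_right Rplus 0 (map (fun w => g w - h w) l).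
Proof. induction l; simpl. ring. rewrite <- IHl. ring. Qed.

Lemma sum_ext {V : Type} (l : list V) (g h : V -> R) :
  (forall w, In w l -> g w = h w) ->
  fold_right Rplus 0 (map g l) = fold_right Rplus 0 (map h l).
Proof. intro H; f_equal; apply map_ext_in; auto. Qed.

Lemma deriv_ext f x l l' : derivable_pt_lim f x l -> l = l' -> derivable_pt_lim f x l'.
Proof. intros H ->; exact H. Qed.

Lemma tangent (psi psi' : R -> R) (Hc1 : C1_pos psi psi') (Hconc : concave_pos psi) s :
  0 < s -> psi s - psi 1 <= psi' 1 * (s - 1).
Proof.
  intro Hs.
  destruct (Rle_or_lt (psi s - psi 1) (psi' 1 * (s - 1))) as [Hle|Hlt]; [exact Hle|exfalso].
  assert (Hs1 : s <> 1) by (intro E; subst; lra).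
  set (dl := psi s - psi 1 - psi' 1 * (s - 1)).
  assert (Hdl : 0 < dl) by (unfold dl; lra).
  assert (Ha : 0 < Rabs (s - 1)) by (apply Rabs_pos_lt; lra).
  destruct (Hc1 1 ltac:(lra)) as [Hd _].
  destruct (Hd (dl / Rabs (s - 1)) ltac:(apply Rdiv_lt_0_compat; lra)) as [del Hdel].
  assert (Hdp := cond_pos del).
  set (t := Rmin 1 (del / (2 * Rabs (s - 1)))).
  assert (Ht0 : 0 < t). { unfold t; apply Rmin_glb_lt; [lra|]. apply Rdiv_lt_0_compat; lra. }
  assert (Ht1 : t <= 1) by (unfold t; apply Rmin_l).
  assert (Ht2 : t <= del / (2 * Rabs (s - 1))) by (unfold t; apply Rmin_r).
  set (h := t * (s - 1)).
  assert (Hh0 : h <> 0) by (unfold h; intro E; apply Rmult_integral in E; destruct E; lra).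
  assert (Habsh : Rabs h = t * Rabs (s - 1)).
  { unfold h; rewrite Rabs_mult, Rabs_right; lra. }
  assert (Hhd : Rabs h < del).
  { rewrite Habsh. apply Rle_lt_trans with (del / (2 * Rabs (s - 1)) * Rabs (s - 1)).
    apply Rmult_le_compat_r; lra.
    replace (del / (2 * Rabs (s - 1)) * Rabs (s - 1)) with (del / 2) by (field; lra). lra. }
  specialize (Hdel h Hh0 Hhd).
  assert (Hc := Hconc s 1 t Hs ltac:(lra) ltac:(lra)).
  replace (t * s + (1 - t) * 1) with (1 + h) in Hc by (unfold h; ring).
  assert (Hk : t * dl <= psi (1 + h) - psi 1 - psi' 1 * h).
  { assert (E : t*dl = t*psi s + (1-t)*psi 1 - psi 1 - psi' 1 * h) by (unfold dl, h; ring). lra. }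
  replace ((psi (1 + h) - psi 1) / h - psi' 1) with ((psi (1 + h) - psi 1 - psi' 1 * h) / h)
    in Hdel by (field; auto).
  unfold Rdiv in Hdel. rewrite Rabs_mult, Rabs_inv in Hdel.
  assert (Hph : 0 < Rabs h) by (apply Rabs_pos_lt; auto).
  apply Rmult_lt_compat_r with (r := Rabs h) in Hdel; [|auto].
  rewrite Rmult_assoc, Rinv_l, Rmult_1_r in Hdel by lra.
  rewrite Habsh in Hdel.
  replace (dl * / Rabs (s - 1) * (t * Rabs (s - 1))) with (t * dl) in Hdel by (field; lra).
  assert (Rabs (psi (1 + h) - psi 1 - psi' 1 * h) >= t * dl).
  assert (0 < t * dl) by (apply Rmult_lt_0_compat; lra).
  { rewrite Rabs_right; lra. }
  lra.
Qed.

Lemma dpsi (psi psi' : R -> R) (Hc1 : C1_pos psi psi') {V : Type} (vs : list V) (adj : V -> V -> bool)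
  (u : V -> R -> R) (Hpos : forall v t, 0 <= t -> 0 < u v t)
  (Hder : forall v t, 0 < t -> derivable_pt_lim (u v) t (Lap vs adj (fun w => u w t) v))
  w v t (Ht : 0 < t) :
  derivable_pt_lim (fun s => psi (u w s / u v s)) t
    (psi' (u w t / u v t) * ((Lap vs adj (fun w => u w t) w * u v t
        - Lap vs adj (fun w => u w t) v * u w t) / (u v t)²)).
Proof.
  assert (Hv := Hpos v t ltac:(lra)). assert (Hw := Hpos w t ltac:(lra)).
  apply (derivable_pt_lim_comp (fun s => u w s / u v s) psi).
  - exact (derivable_pt_lim_div (u w) (u v) t _ _ (Hder w t Ht) (Hder v t Ht) (Rgt_not_eq _ _ Hv)).
  - assert (Hq : 0 < u w t / u v t) by (apply Rdiv_lt_0_compat; lra). exact (proj1 (Hc1 _ Hq)).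
Qed.

Lemma dD (psi psi' : R -> R) (Hc1 : C1_pos psi psi') {V : Type} (vs : list V) (adj : V -> V -> bool)
  (u : V -> R -> R) (Hpos : forall v t, 0 <= t -> 0 < u v t)
  (Hder : forall v t, 0 < t -> derivable_pt_lim (u v) t (Lap vs adj (fun w => u w t) v))
  v t (Ht : 0 < t) :
  derivable_pt_lim (fun s => DeltaPsi vs adj psi (fun w => u w s) v) t
    (OmegaPsi vs adj psi' (fun w => u w t) v).
Proof.
  set (L := fun w => Lap vs adj (fun w => u w t) w).
  apply deriv_ext with (l := fold_right Rplus 0 (map (fun w => if adj v w then
     psi' (u w t / u v t) * ((L w * u v t - L v * u w t) / (u v t)²)
     - psi' (u v t / u v t) * ((L v * u v t - L v * u v t) / (u v t)²) else 0) vs)).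
  - apply (deriv_sum vs (fun w s => if adj v w then psi (u w s / u v s) - psi (u v s / u v s) else 0)).
    intros w _. destruct (adj v w).
    + apply (derivable_pt_lim_minus (fun s => psi (u w s / u v s)) (fun s => psi (u v s / u v s)));
        apply (dpsi psi psi' Hc1 vs adj u Hpos Hder); auto.
    + exact (derivable_pt_lim_const 0 t).
  - unfold OmegaPsi. apply sum_ext. intros w _. destruct (adj v w); [|reflexivity].
    assert (Hv := Hpos v t ltac:(lra)). assert (Hw := Hpos w t ltac:(lra)).
    unfold L, Rsqr. field. split; lra.
Qed.

Lemma deriv_left_min f x l r : 0 < r -> (forall y, x - r < y < x -> f x <= f y) ->
  derivable_pt_lim f x l -> l <= 0.
Proof.
  intros Hr Hmin Hd. destruct (Rle_or_lt l 0) as [|Hl]; auto. exfalso.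
  destruct (Hd l Hl) as [del Hdel]. assert (Hdp := cond_pos del).
  assert (Hm : 0 < Rmin del r) by (apply Rmin_glb_lt; lra).
  assert (Hm1 := Rmin_l del r). assert (Hm2 := Rmin_r del r).
  set (h := - Rmin del r / 2).
  assert (Hh : h < 0) by (unfold h; lra).
  assert (Habs : Rabs h < del) by (rewrite Rabs_left by lra; unfold h; lra).
  specialize (Hdel h ltac:(lra) Habs).
  assert (Hf : f x <= f (x + h)) by (apply Hmin; unfold h; lra).
  assert (Hi : / h < 0) by (apply Rinv_lt_0_compat; lra).
  assert (Hq : (f (x + h) - f x) / h <= 0) by (unfold Rdiv; nra).
  rewrite Rabs_left in Hdel by lra. lra.
Qed.

Lemma glob_min {V : Type} (G : V -> R -> R) a T (l : list V) (v0 : V) : a <= T ->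
  (forall v c, a <= c <= T -> continuity_pt (G v) c) ->
  exists v t, a <= t <= T /\ forall w, In w (v0 :: l) -> forall c, a <= c <= T -> G v t <= G w c.
Proof.
  intros HaT Hc. induction l as [|w l IH].
  - destruct (continuity_ab_min (G v0) a T HaT (Hc v0)) as [m [Hm1 Hm2]].
    exists v0, m. split; auto. intros w [<-|[]] c Hcc. auto.
  - destruct IH as [v [t [Ht Hmin]]].
    destruct (continuity_ab_min (G w) a T HaT (Hc w)) as [m [Hm1 Hm2]].
    destruct (Rle_lt_dec (G v t) (G w m)) as [Hle|Hlt].
    + exists v, t. split; auto. intros w' Hw' c Hcc. destruct Hw' as [<-|[<-|Hw']].
      * apply Hmin; auto. left; auto.
      * specialize (Hm1 c Hcc). lra.
      * apply Hmin; auto. right; auto.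
    + exists w, m. split; auto. intros w' Hw' c Hcc. destruct Hw' as [<-|[<-|Hw']].
      * specialize (Hmin v0 (or_introl eq_refl) c Hcc). lra.
      * auto.
      * specialize (Hmin w' (or_intror Hw') c Hcc). lra.
Qed.

Lemma Lap_prod_diff {V : Type} (vs : list V) adj (f g : V -> R) v :
  Lap vs adj (fun w => f w * g w) v - Lap vs adj f v * g v
  = fold_right Rplus 0 (map (fun w => if adj v w then f w * (g w - g v) else 0) vs).
Proof.
  unfold Lap. rewrite sum_mult, sum_minus. apply sum_ext. intros w _.
  destruct (adj v w); ring.
Qed.

Lemma arith d tau Ds Om A B fv : 0 < d -> 0 < tau -> 0 < fv -> Ds + tau * Om <= 0 ->
  B - A * Ds >= 0 -> (Om + A * Ds / fv - B / fv) / 2 >= / d * Ds ^ 2 -> tau * Ds >= - d / 2.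
Proof.
  intros Hd Ht Hf H1 H2 H3.
  assert (E : A * Ds / fv - B / fv = - ((B - A * Ds) / fv)) by (field; lra).
  assert (0 <= (B - A * Ds) / fv) by (unfold Rdiv; apply Rmult_le_pos; [lra| left; apply Rinv_0_lt_compat; lra]).
  assert (H4 : / d * Ds ^ 2 <= Om / 2) by lra.
  assert (H5 : Ds ^ 2 <= d * Om / 2).
  { apply Rmult_le_compat_l with (r := d) in H4; [|lra].
    rewrite <- Rmult_assoc, Rinv_r, Rmult_1_l in H4 by lra. lra. }
  destruct (Rle_or_lt (- d / 2) (tau * Ds)) as [|Hc]; [lra|exfalso].
  assert (HD : Ds < 0) by nra.
  (* tau * Ds^2 <= d * tau * Om / 2 <= - d * Ds / 2 *)
  assert (H6 : tau * Ds ^ 2 <= - d * Ds / 2) by nra.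
  assert (H7 : (tau * Ds) ^ 2 <= - d * (tau * Ds) / 2) by nra.
  nra.
Qed.

Lemma LYa (psi psi' : R -> R) (Hc1 : C1_pos psi psi') (d : R) (Hd : 0 < d)
  {V : Type} (vs : list V) (adj : V -> V -> bool) (Hall : forall v, In v vs)
  (HCD : CDpsi vs adj psi psi' d)
  (u : V -> R -> R) (Hpos : forall v t, 0 <= t -> 0 < u v t)
  (Hder : forall v t, 0 < t -> derivable_pt_lim (u v) t (Lap vs adj (fun w => u w t) v))
  a T x (Ha : 0 < a) (HaT : a < T) :
  (T - a) * DeltaPsi vs adj psi (fun w => u w T) x >= - d / 2.
Proof.
  set (D := fun v t => DeltaPsi vs adj psi (fun w => u w t) v).
  set (G := fun v t => (t - a) * D v t).
  assert (dG : forall v c, 0 < c -> derivable_pt_lim (G v) c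
     (D v c + (c - a) * OmegaPsi vs adj psi' (fun w => u w c) v)).
  { intros v c Hc. apply deriv_ext with (l := (1 - 0) * D v c + (c - a) * OmegaPsi vs adj psi' (fun w => u w c) v); [|ring].
    apply (derivable_pt_lim_mult (fun t => t - a) (D v)).
    - apply (derivable_pt_lim_minus id (fct_cte a)). apply derivable_pt_lim_id. apply derivable_pt_lim_const.
    - apply (dD psi psi' Hc1 vs adj u Hpos Hder v c Hc). }
  assert (Hcont : forall v c, a <= c <= T -> continuity_pt (G v) c).
  { intros v c Hc. apply derivable_continuous_pt. eexists. apply dG. lra. }
  destruct (glob_min G a T vs x ltac:(lra) Hcont) as [vm [tm [Htm Hmin]]].
  assert (HGx : G vm tm <= G x T) by (apply Hmin; [left; auto| lra]).
  change ((T - a) * DeltaPsi vs adj psi (fun w => u w T) x) with (G x T).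
  destruct (Rle_or_lt (- d / 2) (G vm tm)) as [|Hlt]; [lra|exfalso].
  assert (Hta : a < tm).
  { destruct Htm as [[Hl|Hl] _]; auto. subst tm. unfold G in Hlt.
    replace (a - a) with 0 in Hlt by ring. rewrite Rmult_0_l in Hlt. lra. }
  assert (HdG := dG vm tm ltac:(lra)).
  assert (Hneg : D vm tm + (tm - a) * OmegaPsi vs adj psi' (fun w => u w tm) vm <= 0).
  { apply (deriv_left_min (G vm) tm _ (tm - a)); [lra| |exact HdG].
    intros y Hy. apply Hmin; [right; apply Hall | lra]. }
  assert (Hge : forall w, D vm tm <= D w tm).
  { intros w. assert (Hw : G vm tm <= G w tm) by (apply Hmin; [right; apply Hall| lra]).
    unfold G in Hw. apply Rmult_le_reg_l with (r := tm - a); lra. }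
  assert (HP := Lap_prod_diff vs adj (fun w => u w tm) (fun w => D w tm) vm).
  cbv beta in HP.
  assert (HPn : 0 <= fold_right Rplus 0 (map (fun w => if adj vm w then u w tm * (D w tm - D vm tm) else 0) vs)).
  { apply sum_nonneg. intros w _. destruct (adj vm w); [|lra].
    assert (Hu := Hpos w tm ltac:(lra)). assert (Hg := Hge w). nra. }
  assert (HC := HCD (fun w => u w tm) (fun w => Hpos w tm ltac:(lra)) vm).
  unfold Gamma2Psi in HC. cbv beta in HC.
  assert (Hfv := Hpos vm tm ltac:(lra)).
  assert (Hfin : (tm - a) * D vm tm >= - d / 2).
  { apply (arith d (tm - a) (D vm tm) (OmegaPsi vs adj psi' (fun w => u w tm) vm)
      (Lap vs adj (fun w => u w tm) vm) (Lap vs adj (fun w => u w tm * D w tm) vm) (u vm tm));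
    try lra.
    exact HC. }
  unfold G in Hlt. lra.
Qed.

Lemma LY (psi psi' : R -> R) (Hc1 : C1_pos psi psi') (d : R) (Hd : 0 < d)
  {V : Type} (vs : list V) (adj : V -> V -> bool) (Hall : forall v, In v vs)
  (HCD : CDpsi vs adj psi psi' d)
  (u : V -> R -> R) (Hpos : forall v t, 0 <= t -> 0 < u v t)
  (Hder : forall v t, 0 < t -> derivable_pt_lim (u v) t (Lap vs adj (fun w => u w t) v))
  T x (HT : 0 < T) :
  DeltaPsi vs adj psi (fun w => u w T) x >= - d / (2 * T).
Proof.
  set (X := DeltaPsi vs adj psi (fun w => u w T) x).
  destruct (Rle_or_lt (- d / (2 * T)) X) as [|Hlt]; [lra|exfalso].
  assert (HX : X < 0).
  { apply Rlt_trans with (- d / (2 * T)); auto. assert (0 < d / (2 * T)) by (apply Rdiv_lt_0_compat; lra). lra. }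
  set (s := (T + d / (2 * - X)) / 2).
  assert (Hs1 : 0 < d / (2 * - X)) by (apply Rdiv_lt_0_compat; lra).
  assert (Hs2 : d / (2 * - X) < T).
  { apply Rmult_lt_reg_r with (r := 2 * - X); [lra|].
    unfold Rdiv. rewrite Rmult_assoc, Rinv_l, Rmult_1_r by lra.
    apply Rmult_lt_compat_r with (r := T) in Hlt; [|lra].
    replace (- d / (2 * T) * T) with (- d / 2) in Hlt by (field; lra). lra. }
  assert (H := LYa psi psi' Hc1 d Hd vs adj Hall HCD u Hpos Hder (T - s) T x ltac:(unfold s; lra) ltac:(unfold s; lra)).
  fold X in H. replace (T - (T - s)) with s in H by ring.
  (* s > d/(2(-X)) so s * X < -d/2 *)
  assert (Hs3 : d / (2 * - X) < s) by (unfold s; lra).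
  apply Rmult_lt_compat_r with (r := - X) in Hs3; [|lra].
  replace (d / (2 * - X) * - X) with (d / 2) in Hs3 by (field; lra). lra.
Qed.

Lemma stationary (f f' : R -> R) (d : R) (Hd : 0 < d)
  (D1 : forall t, 0 < t -> derivable_pt_lim f t (f' t))
  (D2 : forall t, 0 < t -> f' t >= - d / (2 * t))
  a b (Ha : 0 < a) (Hab : a <= b) : f a - f b <= d / 2 * (ln b - ln a).
Proof.
  destruct Hab as [Hab|<-]; [|lra].
  destruct (MVT_cor2 (fun t => f t + d / 2 * ln t) (fun t => f' t + d / 2 * / t) a b Hab)
    as [c [Hc1 Hc2]].
  { intros c Hc. apply (derivable_pt_lim_plus f (mult_real_fct (d/2) ln)).
    apply D1; lra. apply derivable_pt_lim_scal. apply derivable_pt_lim_ln; lra. }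
  assert (E : - d / (2 * c) = - (d / 2 * / c)) by (field; lra).
  assert (H2 := D2 c ltac:(lra)).
  assert (0 <= (f' c + d / 2 * / c) * (b - a)) by (apply Rmult_le_pos; lra).
  lra.
Qed.

Lemma step {V : Type} (adj : V -> V -> bool) (f f' : V -> R -> R) (d H : R) (Hd : 0 < d) (HH : 0 < H)
  (D1 : forall v t, 0 < t -> derivable_pt_lim (f v) t (f' v t))
  (D2 : forall v t, 0 < t -> f' v t >= - d / (2 * t))
  (D3 : forall x y t, 0 < t -> adj x y = true -> f y t >= f x t ->
        f' x t >= - d / (2 * t) + (f y t - f x t) ^ 2 / H)
  x y (Hyx : adj y x = true) a b (Ha : 0 < a) (Hab : a < b) :
  f x a - f y b <= d / 2 * (ln b - ln a) + H / (b - a).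
Proof.
  set (C := f x a + d / 2 * ln a).
  set (w := fun t => C - d / 2 * ln t - f y t).
  set (w' := fun t => 0 - d / 2 * / t - f' y t).
  assert (dw : forall t, 0 < t -> derivable_pt_lim w t (w' t)).
  { intros t Ht. apply (derivable_pt_lim_minus (fun t => C - d / 2 * ln t) (f y)).
    - apply (derivable_pt_lim_minus (fct_cte C) (mult_real_fct (d/2) ln)).
      apply derivable_pt_lim_const. apply derivable_pt_lim_scal. apply derivable_pt_lim_ln; lra.
    - apply D1; lra. }
  assert (w'le : forall t, 0 < t -> w' t <= 0).
  { intros t Ht. unfold w'. assert (H2 := D2 y t Ht).
    assert (E : - d / (2 * t) = - (d / 2 * / t)) by (field; lra). lra. }
  assert (mono : forall c, a <= c <= b -> w b <= w c).
  { intros c [Hc1 [Hc2|<-]]; [|lra].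
    destruct (MVT_cor2 w w' c b Hc2) as [e [He1 He2]].
    { intros e He. apply dw; lra. }
    assert (w' e * (b - c) <= 0).
    { assert (w' e <= 0) by (apply w'le; lra). nra. }
    lra. }
  assert (Hgoal : w b <= H / (b - a)).
  { destruct (Rle_or_lt (w b) 0) as [Hwb|Hwb].
    { assert (0 < H / (b - a)) by (apply Rdiv_lt_0_compat; lra). lra. }
    assert (wpos : forall c, a <= c <= b -> 0 < w c) by (intros c Hc; specialize (mono c Hc); lra).
    destruct (MVT_cor2 (fun t => 1 / w t) (fun t => (0 * w t - w' t * 1) / (w t)²) a b Hab)
      as [e [He1 He2]].
    { intros e He. apply (derivable_pt_lim_div (fct_cte 1) w).
      apply derivable_pt_lim_const. apply dw; lra.
      assert (0 < w e) by (apply wpos; lra). lra. }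
    assert (Hwe : 0 < w e) by (apply wpos; lra).
    assert (Hst := stationary (f x) (f' x) d Hd (D1 x) (D2 x) a e Ha ltac:(lra)).
    assert (Hfx : f x e - f y e >= w e) by (unfold w, C; lra).
    assert (Hd3 := D3 y x e ltac:(lra) Hyx ltac:(lra)).
    assert (Hsq : (w e) ^ 2 <= (f x e - f y e) ^ 2) by nra.
    assert (Hsq2 : (w e) ^ 2 / H <= (f x e - f y e) ^ 2 / H).
    { unfold Rdiv. apply Rmult_le_compat_r; [left; apply Rinv_0_lt_compat; lra | lra]. }
    assert (Hw'e : w' e <= - ((w e) ^ 2 / H)).
    { unfold w'. assert (E : - d / (2 * e) = - (d / 2 * / e)) by (field; lra). lra. }
    assert (Hz : / H <= (0 * w e - w' e * 1) / (w e)²).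
    { replace ((0 * w e - w' e * 1) / (w e)²) with ((- w' e) / (w e) ^ 2) by (unfold Rsqr; field; lra).
      apply Rmult_le_reg_r with (r := (w e) ^ 2). nra.
      replace (- w' e / w e ^ 2 * w e ^ 2) with (- w' e) by (field; lra).
      replace (/ H * w e ^ 2) with (w e ^ 2 / H) by (field; lra). lra. }
    assert (Hza : 0 < 1 / w a) by (apply Rdiv_lt_0_compat; [lra| apply wpos; lra]).
    assert (Hzz : (b - a) / H < 1 / w b).
    { assert (/ H * (b - a) <= (0 * w e - w' e * 1) / (w e)² * (b - a)) by (apply Rmult_le_compat_r; lra).
      replace ((b - a) / H) with (/ H * (b - a)) by (field; lra). lra. }
    apply Rmult_lt_compat_r with (r := w b * H / (b - a)) in Hzz.
    2:{ apply Rdiv_lt_0_compat; [apply Rmult_lt_0_compat|]; lra. }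
    replace ((b - a) / H * (w b * H / (b - a))) with (w b) in Hzz by (field; lra).
    replace (1 / w b * (w b * H / (b - a))) with (H / (b - a)) in Hzz by (field; lra).
    lra. }
  unfold w, C in Hgoal. lra.
Qed.

Lemma chain {V : Type} (adj : V -> V -> bool) (Hsym : forall v w, adj v w = adj w v)
  (f f' : V -> R -> R) (d H : R) (Hd : 0 < d) (HH : 0 < H)
  (D1 : forall v t, 0 < t -> derivable_pt_lim (f v) t (f' v t))
  (D2 : forall v t, 0 < t -> f' v t >= - d / (2 * t))
  (D3 : forall x y t, 0 < t -> adj x y = true -> f y t >= f x t ->
        f' x t >= - d / (2 * t) + (f y t - f x t) ^ 2 / H)
  x z n (Hw : walk adj x z n) :
  forall a h, 0 < a -> 0 < h ->
  f x a - f z (a + INR n * h) <= d / 2 * (ln (a + INR n * h) - ln a) + INR n * H / h.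
Proof.
  induction Hw as [x|x y z n Hxy Hw IH]; intros a h Ha Hh.
  - simpl. replace (a + 0 * h) with a by ring. lra.
  - assert (Hs := step adj f f' d H Hd HH D1 D2 D3 x y ltac:(rewrite Hsym; exact Hxy) a (a + h) Ha ltac:(lra)).
    assert (Hi := IH (a + h) h ltac:(lra) Hh).
    rewrite S_INR.
    replace (a + (INR n + 1) * h) with (a + h + INR n * h) by ring.
    replace (a + h - a) with h in Hs by ring.
    replace ((INR n + 1) * H / h) with (INR n * H / h + H / h) by (field; lra).
    lra.
Qed.

Lemma Lap_div {V : Type} (vs : list V) adj (g : V -> R) x c :
  Lap vs adj g x / c = fold_right Rplus 0 (map (fun w => if adj x w then (g w - g x) / c else 0) vs).
Proof.
  unfold Lap, Rdiv. rewrite sum_mult. apply sum_ext. intros w _. destruct (adj x w); ring.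
Qed.

Lemma ident (psi psi' : R -> R) (Hd1 : psi' 1 = 1) {V : Type} (vs : list V) adj
  (u : V -> R -> R) x t (Hx : 0 < u x t) :
  Lap vs adj (fun w => u w t) x / u x t - DeltaPsi vs adj psi (fun w => u w t) x
  = fold_right Rplus 0 (map (fun w => if adj x w then psibar psi psi' (u w t / u x t) else 0) vs).
Proof.
  rewrite Lap_div. unfold DeltaPsi, Lap. rewrite sum_minus. apply sum_ext.
  intros w _. destruct (adj x w); [|ring]. cbv beta.
  replace (u x t / u x t) with 1 by (field; lra). unfold psibar. rewrite Hd1. field. lra.
Qed.

Lemma psibar_nonneg (psi psi' : R -> R) (Hc1 : C1_pos psi psi') (Hconc : concave_pos psi)
  (Hd1 : psi' 1 = 1) s : 0 < s -> 0 <= psibar psi psi' s.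
Proof. intro Hs. assert (T := tangent psi psi' Hc1 Hconc s Hs). unfold psibar. lra. Qed.

Lemma H_pos (psi psi' : R -> R) H (HH : H_psi_finite_eq psi psi' H) : 0 < H.
Proof.
  destruct HH as [Hp [Hub _]].
  assert (Hl : 0 < ln 2) by (assert (Hl2 := ln_lt_2); lra).
  assert (Hp2 := Hp 2 ltac:(lra)).
  assert (H12 : 1 < 2) by lra.
  assert (Hr := Hub ((ln 2) ^ 2 / psibar psi psi' 2) (ex_intro _ 2 (conj H12 eq_refl))).
  assert (0 < (ln 2) ^ 2 / psibar psi psi' 2) by (apply Rdiv_lt_0_compat; nra).
  lra.
Qed.

Lemma psibar_ge (psi psi' : R -> R) (Hc1 : C1_pos psi psi') (Hconc : concave_pos psi)
  (Hd1 : psi' 1 = 1) H (HH : H_psi_finite_eq psi psi' H) s :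
  0 < s -> 0 <= ln s -> (ln s) ^ 2 / H <= psibar psi psi' s.
Proof.
  intros Hs Hl. assert (HHp := H_pos psi psi' H HH).
  destruct Hl as [Hl|Hl].
  - assert (Hs1 : 1 < s).
    { destruct (Rlt_le_dec 1 s) as [|[Hs1|Hs1]]; auto.
      - assert (Hi := ln_increasing s 1 Hs Hs1). rewrite ln_1 in Hi. lra.
      - subst. rewrite ln_1 in Hl. lra. }
    destruct HH as [Hp [Hub _]].
    assert (Hps := Hp s Hs1).
    assert (Hr := Hub ((ln s) ^ 2 / psibar psi psi' s) (ex_intro _ s (conj Hs1 eq_refl))).
    apply Rmult_le_compat_r with (r := psibar psi psi' s) in Hr; [|lra].
    replace ((ln s) ^ 2 / psibar psi psi' s * psibar psi psi' s) with ((ln s) ^ 2) in Hr by (field; lra).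
    apply Rmult_le_reg_r with (r := H); [lra|].
    replace (ln s ^ 2 / H * H) with (ln s ^ 2) by (field; lra). lra.
  - rewrite <- Hl. replace (0 ^ 2 / H) with 0 by (field; lra).
    apply psibar_nonneg; auto.
Qed.

Lemma ln_div' a b : 0 < a -> 0 < b -> ln (a / b) = ln a - ln b.
Proof. intros. unfold Rdiv. rewrite ln_mult, ln_Rinv; try lra. apply Rinv_0_lt_compat; lra. Qed.

Theorem mainTheorem11
  (psi psi' : R -> R)
  (Hc1 : C1_pos psi psi')
  (Hconc : concave_pos psi)
  (Hd1 : psi' 1 = 1)
  (H : R) (HH : H_psi_finite_eq psi psi' H)
  (d : R) (Hd : 0 < d)
  (V : Type) (vs : list V) (adj : V -> V -> bool)
  (HG : finite_graph vs adj) (Hconn : connected adj)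
  (HCD : CDpsi vs adj psi psi' d)
  (u : V -> R -> R) (Hu : pos_heat_solution vs adj u)
  (x1 x2 : V) (T1 T2 : R) (HT1 : 0 < T1) (HT12 : T1 < T2)
  (n : nat) (Hn : is_dist adj x1 x2 n) :
  ln (u x1 T1 / u x2 T2) <= d / 2 * ln (T2 / T1) + H * (INR n) ^ 2 / (T2 - T1).
Proof.
  destruct HG as [_ [Hall [Hsym _]]]. destruct Hu as [Hpos [Hder _]].
  assert (HHp := H_pos psi psi' H HH).
  set (f := fun v t => ln (u v t)).
  set (f' := fun v t => Lap vs adj (fun w => u w t) v / u v t).
  assert (D1 : forall v t, 0 < t -> derivable_pt_lim (f v) t (f' v t)).
  { intros v t Ht. assert (Hv := Hpos v t ltac:(lra)).
    apply deriv_ext with (l := / u v t * Lap vs adj (fun w => u w t) v).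
    - apply (derivable_pt_lim_comp (u v) ln). apply Hder; auto. apply derivable_pt_lim_ln; auto.
    - unfold f'. field. lra. }
  assert (D0 : forall x t, 0 < t -> f' x t - DeltaPsi vs adj psi (fun w => u w t) x
      = fold_right Rplus 0 (map (fun w => if adj x w then psibar psi psi' (u w t / u x t) else 0) vs)).
  { intros x t Ht. apply ident; auto. apply Hpos; lra. }
  assert (LYt : forall x t, 0 < t -> DeltaPsi vs adj psi (fun w => u w t) x >= - d / (2 * t)).
  { intros x t Ht. apply (LY psi psi' Hc1 d Hd vs adj Hall HCD u Hpos Hder t x Ht). }
  assert (D2 : forall v t, 0 < t -> f' v t >= - d / (2 * t)).
  { intros v t Ht. assert (E := D0 v t Ht). assert (L := LYt v t Ht).
    assert (0 <= fold_right Rplus 0 (map (fun w => if adj v w then psibar psi psi' (u w t / u v t) else 0) vs)).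
    { apply sum_nonneg. intros w _. destruct (adj v w); [|lra]. apply psibar_nonneg; auto.
      apply Rdiv_lt_0_compat; apply Hpos; lra. }
    lra. }
  assert (D3 : forall x y t, 0 < t -> adj x y = true -> f y t >= f x t ->
        f' x t >= - d / (2 * t) + (f y t - f x t) ^ 2 / H).
  { intros x y t Ht Hxy Hf. assert (E := D0 x t Ht). assert (L := LYt x t Ht).
    assert (Hx := Hpos x t ltac:(lra)). assert (Hy := Hpos y t ltac:(lra)).
    assert (Hs : 0 < u y t / u x t) by (apply Rdiv_lt_0_compat; lra).
    assert (Hln : ln (u y t / u x t) = f y t - f x t) by (unfold f; apply ln_div'; lra).
    assert (Hge := psibar_ge psi psi' Hc1 Hconc Hd1 H HH (u y t / u x t) Hs ltac:(lra)).
    rewrite Hln in Hge.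
    assert (Hone := sum_ge_one vs (fun w => if adj x w then psibar psi psi' (u w t / u x t) else 0) y).
    cbv beta in Hone. rewrite Hxy in Hone.
    assert (Hone' := Hone ltac:(intros w _; destruct (adj x w); [apply psibar_nonneg; auto;
        apply Rdiv_lt_0_compat; apply Hpos; lra | lra]) (Hall y)).
    lra. }
  assert (Hu1 := Hpos x1 T1 ltac:(lra)). assert (Hu2 := Hpos x2 T2 ltac:(lra)).
  rewrite ln_div' by lra. rewrite (ln_div' T2 T1) by lra.
  change (ln (u x1 T1) - ln (u x2 T2)) with (f x1 T1 - f x2 T2).
  destruct Hn as [Hw _].
  destruct n as [|n].
  - inversion Hw; subst.
    assert (S := stationary (f x2) (f' x2) d Hd (D1 x2) (D2 x2) T1 T2 HT1 ltac:(lra)).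
    simpl. replace (H * 0 ^ 2 / (T2 - T1)) with 0 by (field; lra). lra.
  - assert (Hn0 : 0 < INR (S n)) by (apply lt_0_INR; apply Nat.lt_0_succ).
    set (h := (T2 - T1) / INR (S n)).
    assert (Hh : 0 < h) by (apply Rdiv_lt_0_compat; lra).
    assert (Ch := chain adj Hsym f f' d H Hd HHp D1 D2 D3 x1 x2 (S n) Hw T1 h HT1 Hh).
    replace (T1 + INR (S n) * h) with T2 in Ch by (unfold h; field; lra).
    replace (INR (S n) * H / h) with (H * INR (S n) ^ 2 / (T2 - T1)) in Ch by (unfold h; field; lra).
    lra.
Qed.
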